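(* Let $q$ be a prime power, $m\ge1$, $j\ge1$, let $G\in GF(q^m)[x]$ be separable with a factorization $G=\prod_{i=1}^{l}G_i$ into pairwise coprime factors, and let $L=\{\alpha_1,\dots,\alpha_n\}\subseteq GF(q^m)$ with $G(\alpha_k)\ne0$ for all $k$. Put $G_i^{(j)}=G_i^j$ and $G^{(j)}=G^j=\prod_{i=1}^l G_i^{(j)}$. If $r_i$ denotes the redundancy ($n$ minus the dimension) of the code $\Gamma(L,G_i^{(j)})$, then the dimension $k$ of $\Gamma(L,G^{(j)})$ satisfies $k\ge n-\sum_{i=1}^l r_i$.
   Context: For a set $L=\{\alpha_1,\dots,\alpha_n\}$ of distinct elements of $GF(q^m)$ and $P\in GF(q^m)[x]$ with $P(\alpha_k)\neq0$ for all $k$, the $q$-ary Goppa code is $\Gamma(L,P)=\{c\in GF(q)^n:\ \sum_k \frac{c_k}{x-\alpha_k}\equiv 0 \pmod{P(x)}\}$, a $GF(q)$-linear code; dimensions are over $GF(q)$. *)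

(* Defs.v *)
From HB Require Import structures.
From mathcomp Require Import all_boot all_order all_algebra all_field.
Set Implicit Arguments. Unset Strict Implicit. Unset Printing Implicit Defensive.
Import GRing.Theory.
Local Open Scope ring_scope.

(* GF(q) is a finite field F; GF(q^m) is a finite-dimensional field extension E
   of F (m = \dim {:E}, q = #|F|). *)

(* Inverse of a modulo P, via the extended Euclidean algorithm:
   e.1 * a + e.2 * P is associate to gcd(a,P); when a and P are coprime it is a
   nonzero constant c, and c^-1 * e.1 is the inverse of a in E[x]/(P). *)
Definition invmodp (E : fieldType) (P a : {poly E}) : {poly E} :=
  let e := egcdp a P in (lead_coef (e.1 * a + e.2 * P))^-1 *: e.1.

Definition goppa_code (F : finFieldType) (E : fieldExtType F) (n : nat)
    (alpha : 'I_n -> E) (P : {poly E}) : {set 'rV[F]_n} :=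
  [set c : 'rV[F]_n |
     P %| \sum_(k < n) (c ord0 k)%:A%:P * invmodp P ('X - (alpha k)%:P)].

Definition code_dim (F : finFieldType) (n : nat) (C : {set 'rV[F]_n}) : nat :=
  \dim <<enum C>>%VS.

(* Main.v *)
Require Import Defs.
From HB Require Import structures.
From mathcomp Require Import all_boot all_order all_algebra all_field.
From mathcomp Require Import zify.
Import GRing.Theory.
Local Open Scope ring_scope.

Lemma invmodp_spec (E : fieldType) (P a : {poly E}) :
  coprimep a P -> P %| invmodp P a * a - 1.
Proof.
rewrite /invmodp /coprimep => cop.
set e := egcdp a P.
have := egcdpE a P; rewrite -/e => /eqp_size Hs.
rewrite Hs in cop.
move/size_poly1P: cop => [c c0 Hc].
rewrite Hc lead_coefC -mul_polyC -mulrA.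
have -> : e.1 * a = c%:P - e.2 * P by rewrite -Hc addrK.
rewrite mulrBr -polyCM mulVf // polyC1 addrAC subrr add0r mulrA -mulNr.
exact: dvdp_mull (dvdpp P).
Qed.
Arguments invmodp_spec {E P a}.

Lemma invmodp_dvd (E : fieldType) (P Q a : {poly E}) :
  coprimep a P -> Q %| P -> Q %| invmodp P a - invmodp Q a.
Proof.
move=> cP QP.
have cQ : coprimep a Q by rewrite coprimep_sym (coprimep_dvdr QP) // coprimep_sym.
have h1 := dvdp_trans QP (invmodp_spec cP).
have h2 := invmodp_spec cQ.
have cQa : coprimep Q a by rewrite coprimep_sym.
rewrite -(Gauss_dvdpl _ cQa).
have -> : (invmodp P a - invmodp Q a) * a = (invmodp P a * a - 1) - (invmodp Q a * a - 1).
  by rewrite mulrBl opprB addrA subrK.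
exact: dvdp_sub.
Qed.
Arguments invmodp_dvd {E P Q a}.

Lemma dvdp_prod_pairwise (E : fieldType) (l : nat) (Fs : 'I_l -> {poly E}) (p : {poly E}) :
  (forall i i' : 'I_l, i != i' -> coprimep (Fs i) (Fs i')) ->
  (\prod_(i < l) Fs i %| p) = [forall i, Fs i %| p].
Proof.
elim: l Fs => [|l IH] Fs cop.
  by rewrite big_ord0 dvd1p; symmetry; apply/forallP => -[].
rewrite big_ord_recr /= Gauss_dvdp; last first.
  elim/big_ind: _ => //; first exact: coprime1p.
    by move=> x y hx hy; rewrite coprimepMl hx hy.
  by move=> i _; apply: cop; rewrite neq_ltn /= ltn_ord.
rewrite (IH (fun i => Fs (widen_ord (leqnSn l) i))); last first.
  by move=> i i' ii'; apply: cop; apply: contra ii' => /eqP [] /val_inj ->.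
apply/andP/forallP => [[/forallP h1 h2] i|h].
  case: (unliftP ord_max i) => [i'|] ->; last exact: h2.
  suff -> : lift ord_max i' = widen_ord (leqnSn l) i' by [].
  by apply/val_inj; rewrite /= /bump leqNgt ltn_ord.
split; last exact: h.
by apply/forallP => i.
Qed.

Section Code.
Variables (F : finFieldType) (E : fieldExtType F) (n : nat) (alpha : 'I_n -> E).

Definition S (P : {poly E}) (c : 'rV[F]_n) :=
  \sum_(k < n) (c ord0 k)%:A%:P * invmodp P ('X - (alpha k)%:P).

Lemma goppaE P c : (c \in goppa_code alpha P) = (P %| S P c).
Proof. by rewrite inE. Qed.

Lemma algM (x y : F) : (x * y)%:A = x%:A * y%:A :> E.
Proof. by rewrite -scalerAl mul1r scalerA. Qed.

Lemma goppa_lin P a c d : c \in goppa_code alpha P -> d \in goppa_code alpha P ->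
  a *: c + d \in goppa_code alpha P.
Proof.
rewrite !goppaE => hc hd.
have -> : S P (a *: c + d) = a%:A%:P * S P c + S P d.
  rewrite /S mulr_sumr -big_split /=; apply: eq_bigr => k _.
  by rewrite !mxE scalerDl algM polyCD polyCM mulrDl mulrA.
by apply: dvdp_add => //; apply: dvdp_mull.
Qed.

Lemma goppa0 P : 0 \in goppa_code alpha P.
Proof.
rewrite goppaE /S big1 ?dvdp0 // => k _.
by rewrite mxE scale0r polyC0 mul0r.
Qed.

Lemma mem_span_goppa P x :
  (x \in <<enum (goppa_code alpha P)>>%VS) = (x \in goppa_code alpha P).
Proof.
apply/idP/idP => [|hx]; last by apply: memv_span; rewrite mem_enum.
set X := in_tuple (enum (goppa_code alpha P)).
move=> hx; have := @coord_span _ _ _ X x hx => ->.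
elim/big_ind: _ => //; first exact: goppa0.
  by move=> u v hu hv; rewrite -[u]scale1r; apply: goppa_lin.
move=> i _; rewrite -[_ *: _]addr0; apply: goppa_lin; last exact: goppa0.
by rewrite -mem_enum; apply: mem_nth; case: i => i hi /=; rewrite -[X in (_ < X)%N](size_tuple X).
Qed.

Lemma dvdp_S P Q c : (forall k, coprimep ('X - (alpha k)%:P) P) -> Q %| P ->
  (Q %| S P c) = (Q %| S Q c).
Proof.
move=> cop QP.
have h : Q %| S P c - S Q c.
  rewrite /S -sumrB; apply: (big_ind (fun p => Q %| p)); first exact: dvdp0.
    by move=> u v; apply: dvdp_add.
  by move=> k _; rewrite -mulrBr; apply: dvdp_mull; apply: invmodp_dvd.
by rewrite -(subrK (S Q c) (S P c)) dvdp_addr.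
Qed.

End Code.

Lemma dim_bigcap (K : fieldType) (vT : vectType K) (l : nat) (V : 'I_l -> {vspace vT}) :
  (\dim {:vT} <= \dim (\bigcap_(i < l) V i) + \sum_(i < l) (\dim {:vT} - \dim (V i)))%N.
Proof.
elim: l V => [|l IH] V; first by rewrite !big_ord0 addn0.
rewrite !big_ord_recr /=.
set A := (\bigcap_(i < l) V (widen_ord (leqnSn l) i))%VS.
have h := IH (fun i => V (widen_ord (leqnSn l) i)).
have h1 := dimv_sum_cap A (V ord_max).
have h2 : (\dim (A + V ord_max) <= \dim {:vT})%N by apply: dimvS; apply: subvf.
have h3 : (\dim (V ord_max) <= \dim {:vT})%N by apply: dimvS; apply: subvf.
move: h h1 h2 h3; rewrite -/A.
set s := \sum_(i < l) _.
set a := \dim A; set b := \dim (V ord_max); set c := \dim (A :&: _); set d := \dim (A + _); set N := \dim {:vT}.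
move=> h h1 h2 h3.
lia.
Qed.

Lemma memv_bigcapI (K : fieldType) (vT : vectType K) (l : nat) (V : 'I_l -> {vspace vT}) x :
  (x \in (\bigcap_(i < l) V i)%VS) = [forall i, x \in V i].
Proof.
rewrite memvE; apply/subv_bigcapP/forallP => h i; first exact: h.
by move=> _; rewrite -memvE; apply: h.
Qed.

Theorem lemma2 (F : finFieldType) (E : fieldExtType F) (n l j : nat)
    (alpha : 'I_n -> E) (G : {poly E}) (Gs : 'I_l -> {poly E}) :
  (1 <= j)%N ->
  injective alpha ->
  separable_poly G ->
  G = \prod_(i < l) Gs i ->
  (forall i i' : 'I_l, i != i' -> coprimep (Gs i) (Gs i')) ->
  (forall k, G.[alpha k] != 0) ->
  (code_dim (goppa_code alpha (G ^+ j))
     >= n - \sum_(i < l) (n - code_dim (goppa_code alpha (Gs i ^+ j))))%N.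
Proof.
move=> _ _ _ defG cop G0.
have copX : forall (P : {poly E}) k, P %| G ^+ j -> coprimep ('X - (alpha k)%:P) P.
  move=> P k PG; rewrite coprimep_sym (coprimep_dvdr PG) //.
  by rewrite coprimep_XsubC rootE horner_exp expf_eq0 negb_and G0 orbT.
have dvdi : forall i, Gs i ^+ j %| G ^+ j.
  move=> i; apply: dvdp_exp2r; rewrite defG (bigD1 i) //=; exact: dvdp_mulIl.
have eqV : <<enum (goppa_code alpha (G ^+ j))>>%VS =
    (\bigcap_(i < l) <<enum (goppa_code alpha (Gs i ^+ j))>>)%VS.
  apply/vspaceP => x; rewrite memv_bigcapI mem_span_goppa goppaE.
  have Hp : G ^+ j = \prod_(i < l) Gs i ^+ j by rewrite defG prodrXl.
  rewrite {1}Hp.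
  rewrite dvdp_prod_pairwise; last first.
    by move=> i i' ii'; apply/coprimep_expl/coprimep_expr/cop.
  apply: eq_forallb => i.
  rewrite mem_span_goppa goppaE (@dvdp_S _ _ _ alpha (G ^+ j)) //.
  by move=> k; apply: copX; apply: dvdpp.
rewrite /code_dim eqV.
have := @dim_bigcap _ _ l (fun i => <<enum (goppa_code alpha (Gs i ^+ j))>>%VS).
rewrite dimvf dim_matrix mul1r.
lia.
Qed.
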